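(* Let $A\in\mathcal{V}$ be hyperarchimedean. Then every congruence $\theta$ of $A$ has $CBLP$.
   Context: $\mathcal{V}$ is a congruence modular, semidegenerate variety (no nontrivial algebra has a one-element subalgebra) of finite signature. For $B\in\mathcal{V}$: $Con(B)$ is its congruence lattice with bounds $\Delta_B,\nabla_B$, $[\cdot,\cdot]$ the Freese–McKenzie commutator, $K(B)$ the compact congruences; $[\alpha,\alpha]^0=\alpha$, $[\alpha,\alpha]^{n+1}=[[\alpha,\alpha]^n,[\alpha,\alpha]^n]$. A congruence $\phi\neq\nabla_B$ is prime if $[\alpha,\beta]\subseteq\phi$ implies $\alpha\subseteq\phi$ or $\beta\subseteq\phi$; $\rho(\theta)$ is the intersection of primes containing $\theta$. $B(Con(B))$ is the Boolean algebra of complemented elements of $Con(B)$. When $K(B)$ is closed under the commutator, the reticulation $L(B)=K(B)/{\equiv}$ ($\alpha\equiv\beta$ iff $\rho(\alpha)=\rho(\beta)$) is a bounded distributive lattice with canonical map $\lambda_B$, mapping $B(Con(B))$ injectively into $B(L(B))$; the reticulation preserves the Boolean center if this map is onto $B(L(B))$. Standing assumption: for every $B\in\mathcal{V}$, $K(B)$ is closed under the commutator and the reticulation of $B$ preserves the Boolean center. $A$ is hyperarchimedean if for every $\alpha\in Con(A)$ there is $n\geq1$ with $[\alpha,\alpha]^n\in B(Con(A))$. A congruence $\theta$ of $A$ has $CBLP$ if for every $\beta\in B(Con(A/\theta))$ there is $\alpha\in B(Con(A))$ with $(\alpha\vee\theta)/\theta=\beta$. *)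

(* Defs.v *)
From mathcomp Require Import all_boot.
From Stdlib Require List.
From Stdlib Require Import ClassicalEpsilon.

Set Implicit Arguments.
Unset Strict Implicit.
Unset Printing Implicit Defensive.

Record signature := Signature { sop : finType; sar : sop -> nat }.

Record algebra (S : signature) := Algebra {
  carrier :> Type;
  interp : forall o : sop S, ('I_(sar o) -> carrier) -> carrier }.

Inductive term (S : signature) (X : Type) : Type :=
  | tvar : X -> term S X
  | tapp : forall o : sop S, ('I_(sar o) -> term S X) -> term S X.

Fixpoint eval (S : signature) (A : algebra S) (X : Type) (e : X -> A)
  (t : term S X) : A :=
  match t with
  | tvar x => e x
  | tapp o ts => @interp S A o (fun i => eval e (ts i))
  end.

(* A variety is an equational class Mod(Sigma) (Birkhoff). *)
Definition identities (S : signature) := term S nat -> term S nat -> Prop.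

Definition in_variety (S : signature) (Sigma : identities S) (A : algebra S) : Prop :=
  forall s t, Sigma s t -> forall e : nat -> A, eval e s = eval e t.

Definition crel (T : Type) := T -> T -> Prop.

Section Con.
Variables (S : signature) (A : algebra S).

Definition subrel (a b : crel A) := forall x y, a x y -> b x y.
Definition rel_eq (a b : crel A) := forall x y, a x y <-> b x y.

Definition is_congruence (th : crel A) : Prop :=
  (forall x, th x x) /\ (forall x y, th x y -> th y x) /\
  (forall x y z, th x y -> th y z -> th x z) /\
  (forall (o : sop S) (a b : 'I_(sar o) -> A),
      (forall i, th (a i) (b i)) -> th (@interp S A o a) (@interp S A o b)).

Definition Delta : crel A := fun x y => x = y.
Definition Nabla : crel A := fun _ _ => True.

Definition Cg (R : crel A) : crel A :=
  fun x y => forall th, is_congruence th -> subrel R th -> th x y.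

Definition cmeet (a b : crel A) : crel A := fun x y => a x y /\ b x y.
Definition cjoin (a b : crel A) : crel A := Cg (fun x y => a x y \/ b x y).
Definition csup (F : crel A -> Prop) : crel A :=
  Cg (fun x y => exists a, F a /\ a x y).

Definition compact (a : crel A) : Prop :=
  is_congruence a /\
  forall F : crel A -> Prop, (forall b, F b -> is_congruence b) ->
    subrel a (csup F) ->
    exists l : list (crel A), (forall b, List.In b l -> F b) /\
                              subrel a (csup (fun b => List.In b l)).

Definition complemented (a : crel A) : Prop :=
  is_congruence a /\
  exists b, is_congruence b /\ rel_eq (cmeet a b) Delta /\ rel_eq (cjoin a b) Nabla.

Definition envsum (X Y : Type) (a : X -> A) (c : Y -> A) : X + Y -> A :=
  fun v => match v with inl i => a i | inr j => c j end.

Definition centralizes (a b d : crel A) : Prop :=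
  forall (t : term S (nat + nat)) (x y u v : nat -> A),
    (forall i, a (x i) (y i)) -> (forall j, b (u j) (v j)) ->
    d (eval (envsum x u) t) (eval (envsum x v) t) ->
    d (eval (envsum y u) t) (eval (envsum y v) t).

Definition commutator (a b : crel A) : crel A :=
  fun x y => forall d, is_congruence d -> centralizes a b d -> d x y.

Fixpoint comm_pow (a : crel A) (n : nat) : crel A :=
  match n with
  | 0 => a
  | n'.+1 => commutator (comm_pow a n') (comm_pow a n')
  end.

Definition prime_cong (p : crel A) : Prop :=
  is_congruence p /\ ~ rel_eq p Nabla /\
  forall a b, is_congruence a -> is_congruence b ->
    subrel (commutator a b) p -> subrel a p \/ subrel b p.

Definition rho (th : crel A) : crel A :=
  fun x y => forall p, prime_cong p -> subrel th p -> p x y.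

Definition K_closed : Prop :=
  forall a b, compact a -> compact b -> compact (commutator a b).

(* The element lambda_A(a) of L(A) = K(A)/== lies in B(L(A)), where
   lambda(a) /\ lambda(b) = lambda([a,b]), lambda(a) \/ lambda(b) = lambda(a \/ b),
   0 = lambda(Delta), 1 = lambda(Nabla), and lambda(a) = lambda(b) iff rho a = rho b. *)
Definition ret_boolean (a : crel A) : Prop :=
  compact a /\
  exists b, compact b /\
    rel_eq (rho (commutator a b)) (rho Delta) /\
    rel_eq (rho (cjoin a b)) (rho Nabla).

(* lambda_A restricted to B(Con(A)) is onto B(L(A)) *)
Definition preserves_boolean_center : Prop :=
  forall a, ret_boolean a ->
    exists g, complemented g /\ compact g /\ rel_eq (rho g) (rho a).

Definition hyperarchimedean : Prop :=
  forall a, is_congruence a ->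
    exists n, 1 <= n /\ complemented (comm_pow a n).

Definition qcar (th : crel A) : Type := { P : A -> Prop | exists a, P = th a }.

Definition qrep (th : crel A) (X : qcar th) : A :=
  proj1_sig (constructive_indefinite_description _ (proj2_sig X)).

Definition qproj (th : crel A) (a : A) : qcar th :=
  exist _ (th a) (ex_intro _ a erefl).

Definition quotient (th : crel A) : algebra S :=
  @Algebra S (qcar th)
    (fun o args => qproj th (@interp S A o (fun i => qrep (args i)))).

Definition quot_rel (th a : crel A) : crel (quotient th) :=
  fun X Y => exists x y, X = qproj th x /\ Y = qproj th y /\ a x y.

End Con.

Definition CBLP (S : signature) (A : algebra S) (th : crel A) : Prop :=
  forall b : crel (quotient th), @complemented S (quotient th) b ->
    exists a : crel A, complemented a /\ rel_eq (@quot_rel S A th (cjoin a th)) b.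


Definition congruence_modular (S : signature) (Sigma : identities S) : Prop :=
  forall B : algebra S, in_variety Sigma B ->
    forall a b c : crel B, is_congruence a -> is_congruence b -> is_congruence c ->
      subrel a c -> rel_eq (cjoin a (cmeet b c)) (cmeet (cjoin a b) c).

Definition semidegenerate (S : signature) (Sigma : identities S) : Prop :=
  forall B : algebra S, in_variety Sigma B ->
    (exists x : B, forall o : sop S, @interp S B o (fun _ => x) = x) ->
    forall y z : B, y = z.

(* Main.v *)
Require Import Defs.
From mathcomp Require Import all_boot.
From Stdlib Require Import FunctionalExtensionality ProofIrrelevance PropExtensionality ClassicalEpsilon.

Set Implicit Arguments.
Unset Strict Implicit.
Unset Printing Implicit Defensive.
Local Notation subrel := Defs.subrel.
Local Notation rel_eq := Defs.rel_eq.



Section Basic.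
Variables (S : signature) (A : algebra S).

Lemma eval_ext X (e e' : X -> A) t : (forall x, e x = e' x) -> eval e t = eval e' t.
Proof. move=> H; have -> : e = e' by apply: functional_extensionality. by []. Qed.

Lemma cong_refl (R : crel A) : is_congruence R -> forall x, R x x.
Proof. by case. Qed.
Lemma cong_sym (R : crel A) : is_congruence R -> forall x y, R x y -> R y x.
Proof. by case=> _ []. Qed.
Lemma cong_trans (R : crel A) : is_congruence R -> forall x y z, R x y -> R y z -> R x z.
Proof. by case=> _ [] _ []. Qed.
Lemma cong_comp (R : crel A) : is_congruence R ->
  forall (o : sop S) (a b : 'I_(sar o) -> A), (forall i, R (a i) (b i)) -> R (@interp S A o a) (@interp S A o b).
Proof. by case=> _ [] _ []. Qed.

Lemma cong_eval (R : crel A) : is_congruence R -> forall X (e e' : X -> A) t,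
  (forall x, R (e x) (e' x)) -> R (eval e t) (eval e' t).
Proof.
move=> HR X e e' t He; elim: t => [x|o ts IH] /=; first exact: He.
by apply: cong_comp.
Qed.

Lemma Delta_cong : is_congruence (@Delta S A).
Proof.
rewrite /Delta; split; first by [].
split; first by move=> ? ? ->.
split; first by move=> ? ? ? -> ->.
move=> o a b H; have -> : a = b by apply: functional_extensionality.
by [].
Qed.

Lemma Nabla_cong : is_congruence (@Nabla S A).
Proof. by rewrite /Nabla; do 3 (split; first by []). Qed.

Lemma Cg_cong (R : crel A) : is_congruence (Cg R).
Proof.
split; first by move=> x th Hth _; apply: cong_refl.
split; first by move=> x y H th Hth HR; apply: cong_sym => //; apply: H.
split; first by move=> x y z H1 H2 th Hth HR; apply: (cong_trans Hth (H1 _ Hth HR) (H2 _ Hth HR)).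
move=> o a b H th Hth HR; apply: cong_comp => // i; exact: H.
Qed.

Lemma Cg_incl (R : crel A) : subrel R (Cg R).
Proof. by move=> x y H th _ HR; apply: HR. Qed.

Lemma Cg_min (R th : crel A) : is_congruence th -> subrel R th -> subrel (Cg R) th.
Proof. by move=> Hth HR x y H; apply: H. Qed.

Lemma cjoin_cong (a b : crel A) : is_congruence (cjoin a b).
Proof. exact: Cg_cong. Qed.
Lemma cjoin_l (a b : crel A) : subrel a (cjoin a b).
Proof. by move=> x y H; apply: Cg_incl; left. Qed.
Lemma cjoin_r (a b : crel A) : subrel b (cjoin a b).
Proof. by move=> x y H; apply: Cg_incl; right. Qed.
Lemma cjoin_min (a b c : crel A) : is_congruence c -> subrel a c -> subrel b c -> subrel (cjoin a b) c.
Proof. move=> Hc Ha Hb; apply: Cg_min => // x y [] H; [exact: Ha|exact: Hb]. Qed.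

Lemma cmeet_cong (a b : crel A) : is_congruence a -> is_congruence b -> is_congruence (cmeet a b).
Proof.
move=> Ha Hb; split; first by move=> x; split; apply: cong_refl.
split; first by move=> x y [] ? ?; split; apply: cong_sym.
split; first by move=> x y z [] ? ? [] ? ?; split; apply: cong_trans; eauto.
move=> o u v H; split; apply: cong_comp => // i; by case: (H i).
Qed.

Fixpoint tsubst X Y (s : X -> term S Y) (t : term S X) : term S Y :=
  match t with
  | tvar x => s x
  | tapp o ts => tapp (fun i => tsubst s (ts i))
  end.

Lemma eval_subst X Y (s : X -> term S Y) (e : Y -> A) t :
  eval e (tsubst s t) = eval (fun x => eval e (s x)) t.
Proof.
elim: t => [x|o ts IH] //=.
f_equal; apply: functional_extensionality => i; exact: IH.
Qed.

Lemma comm_cong (a b : crel A) : is_congruence (commutator a b).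
Proof.
split; first by move=> x d Hd _; apply: cong_refl.
split; first by move=> x y H d Hd HC; apply: cong_sym => //; apply: H.
split; first by move=> x y z H1 H2 d Hd HC; apply: (cong_trans Hd (H1 _ Hd HC) (H2 _ Hd HC)).
move=> o u v H d Hd HC; apply: cong_comp => // i; exact: H.
Qed.

Lemma comm_C (a b : crel A) : centralizes a b (commutator a b).
Proof.
move=> t x y u v Hxy Huv H d Hd HC.
apply: (HC t x y u v Hxy Huv); exact: H.
Qed.

Lemma comm_min (a b d : crel A) : is_congruence d -> centralizes a b d -> subrel (commutator a b) d.
Proof. by move=> Hd HC x y H; apply: H. Qed.

Lemma C_left (a b : crel A) : is_congruence a -> centralizes a b a.
Proof.
move=> Ha t x y u v Hxy Huv H.
have H1 : a (eval (envsum x u) t) (eval (envsum y u) t).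
  apply: cong_eval => // -[i|j] /=; [exact: Hxy|exact: cong_refl].
have H2 : a (eval (envsum x v) t) (eval (envsum y v) t).
  apply: cong_eval => // -[i|j] /=; [exact: Hxy|exact: cong_refl].
apply: (cong_trans Ha (cong_sym Ha H1)); apply: (cong_trans Ha H H2).
Qed.

Lemma comm_sub_l (a b : crel A) : is_congruence a -> subrel (commutator a b) a.
Proof. move=> Ha; apply: comm_min => //; exact: C_left. Qed.

Lemma comm_pow_cong (a : crel A) n : is_congruence a -> is_congruence (comm_pow a n).
Proof. by case: n => [|n] //= _; apply: comm_cong. Qed.

Lemma comm_pow_sub (a : crel A) n : is_congruence a -> subrel (comm_pow a n) a.
Proof.
move=> Ha; elim: n => [|n IH] //= x y H.
apply: IH; exact: (comm_sub_l (comm_pow_cong n Ha) H).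
Qed.

End Basic.


Lemma sig_eq (T : Type) (P : T -> Prop) (p q : {x | P x}) : proj1_sig p = proj1_sig q -> p = q.
Proof.
case: p q => [x px] [y py] /= E; subst y; f_equal; apply: proof_irrelevance.
Qed.

Section Sub.
Variables (S : signature) (A : algebra S) (b : crel A) (Hb : is_congruence b).

Definition scar := {p : A * A | b p.1 p.2}.

Definition sub_interp (o : sop S) (args : 'I_(sar o) -> scar) : scar :=
  exist (fun p : A * A => b p.1 p.2)
    (@interp S A o (fun i => (proj1_sig (args i)).1), @interp S A o (fun i => (proj1_sig (args i)).2))
    (cong_comp Hb (fun i => proj2_sig (args i))).

Definition subalg : algebra S := @Algebra S scar sub_interp.

Definition spair (x y : A) (H : b x y) : subalg := exist (fun p : A * A => b p.1 p.2) (x, y) H.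

Lemma eval_sub X (E : X -> subalg) t :
  proj1_sig (eval E t) = (eval (fun x => (proj1_sig (E x)).1) t, eval (fun x => (proj1_sig (E x)).2) t).
Proof.
elim: t => [x|o ts IH] /=; first by case: (proj1_sig (E x)).
have E1 : (fun i => (proj1_sig (eval E (ts i))).1) = (fun i => eval (fun x => (proj1_sig (E x)).1) (ts i)).
  by apply: functional_extensionality => i; rewrite IH.
have E2 : (fun i => (proj1_sig (eval E (ts i))).2) = (fun i => eval (fun x => (proj1_sig (E x)).2) (ts i)).
  by apply: functional_extensionality => i; rewrite IH.
by rewrite E1 E2.
Qed.

Lemma eval_sub1 X (E : X -> subalg) t :
  (proj1_sig (eval E t)).1 = eval (fun x => (proj1_sig (E x)).1) t.
Proof. by rewrite eval_sub. Qed.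
Lemma eval_sub2 X (E : X -> subalg) t :
  (proj1_sig (eval E t)).2 = eval (fun x => (proj1_sig (E x)).2) t.
Proof. by rewrite eval_sub. Qed.

Lemma sub_in_variety (Sigma : identities S) : in_variety Sigma A -> in_variety Sigma subalg.
Proof.
move=> HA s t Hst e; apply: sig_eq; rewrite !eval_sub.
by rewrite (HA s t Hst) (HA s t Hst (fun x => (proj1_sig (e x)).2)).
Qed.

End Sub.

Section Quot.
Variables (S : signature) (A : algebra S) (th : crel A) (Hth : is_congruence th).

Lemma qproj_eq x y : qproj th x = qproj th y <-> th x y.
Proof.
split.
- move=> E; have E1 := f_equal (@proj1_sig _ _) E; simpl in E1.
  have := f_equal (fun f => f y) E1 => /= ->; exact: cong_refl.
- move=> H; apply: sig_eq => /=; apply: functional_extensionality => z.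
  apply: propositional_extensionality; split => H'.
  + exact: (cong_trans Hth (cong_sym Hth H) H').
  + exact: (cong_trans Hth H H').
Qed.

Lemma qproj_qrep (X : qcar th) : qproj th (qrep X) = X.
Proof.
apply: sig_eq => /=; rewrite /qrep.
case: (constructive_indefinite_description _ _) => a /= Ha.
by rewrite Ha.
Qed.

Lemma qrep_qproj x : th (qrep (qproj th x)) x.
Proof. apply/qproj_eq; exact: qproj_qrep. Qed.

Lemma qcar_surj (X : qcar th) : exists x, X = qproj th x.
Proof. by exists (qrep X); rewrite qproj_qrep. Qed.

Lemma interp_quot (o : sop S) (a : 'I_(sar o) -> A) :
  @interp S (quotient th) o (fun i => qproj th (a i)) = qproj th (@interp S A o a).
Proof.
rewrite /= /quotient /=; apply/qproj_eq; apply: cong_comp => // i; exact: qrep_qproj.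
Qed.

Lemma eval_quot X (e : X -> quotient th) t :
  eval e t = qproj th (eval (fun x => qrep (e x)) t).
Proof.
elim: t => [x|o ts IH] /=; first by rewrite qproj_qrep.
apply/qproj_eq; apply: cong_comp => // i; rewrite IH; exact: qrep_qproj.
Qed.

Lemma quot_in_variety (Sigma : identities S) : in_variety Sigma A -> in_variety Sigma (quotient th).
Proof.
move=> HA s t Hst e; rewrite !eval_quot; by rewrite (HA s t Hst).
Qed.

End Quot.


Inductive rtc (T : Type) (R : T -> T -> Prop) : T -> T -> Prop :=
  | rtc_refl x : rtc R x x
  | rtc_step x y z : R x y -> rtc R y z -> rtc R x z.

Lemma rtc_trans T (R : T -> T -> Prop) x y z : rtc R x y -> rtc R y z -> rtc R x z.
Proof. elim=> [//|u v w H _ IH] Hz; apply: rtc_step H (IH Hz). Qed.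

Lemma rtc_one T (R : T -> T -> Prop) x y : R x y -> rtc R x y.
Proof. move=> H; apply: rtc_step H (rtc_refl _ _). Qed.

Section RT.
Variables (S : signature) (A : algebra S) (R1 R2 : crel A).
Hypotheses (H1 : is_congruence R1) (H2 : is_congruence R2).

Definition RU : crel A := fun x y => R1 x y \/ R2 x y.
Definition RT := rtc RU.

Lemma RT_ctx (o : sop S) (f : 'I_(sar o) -> A) (i0 : 'I_(sar o)) w w' :
  RT w w' -> RT (@interp S A o (fun i => if i == i0 then w else f i))
                (@interp S A o (fun i => if i == i0 then w' else f i)).
Proof.
elim=> [x|x y z [H|H] _ IH].
- exact: rtc_refl.
- apply: rtc_step IH; left; apply: cong_comp => // i; case: (i == i0) => //; exact: cong_refl.
- apply: rtc_step IH; right; apply: cong_comp => // i; case: (i == i0) => //; exact: cong_refl.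
Qed.

Lemma RT_cong : is_congruence RT.
Proof.
split; first by move=> x; apply: rtc_refl.
split.
  move=> x y; elim=> [u|u v w [H|H] _ IH].
  - exact: rtc_refl.
  - apply: rtc_trans IH _; apply: rtc_one; left; exact: cong_sym.
  - apply: rtc_trans IH _; apply: rtc_one; right; exact: cong_sym.
split; first by move=> x y z; apply: rtc_trans.
move=> o a b Hab.
pose c (k : nat) := fun i : 'I_(sar o) => if (i < k)%N then b i else a i.
have Hc : forall k, RT (@interp S A o a) (@interp S A o (c k)).
  elim=> [|k IH].
    have -> : c 0 = a by apply: functional_extensionality => i.
    exact: rtc_refl.
  apply: (rtc_trans IH).
  case: (ltnP k (sar o)) => Hk.
  - pose i0 := Ordinal Hk.
    have E1 : c k = (fun i => if i == i0 then a i0 else c k i).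
      apply: functional_extensionality => i; case: eqP => // ->; by rewrite /c /= ltnn.
    have E2 : c k.+1 = (fun i => if i == i0 then b i0 else c k i).
      apply: functional_extensionality => i; case: eqP => [->|Hne]; first by rewrite /c /= ltnSn.
      rewrite /c ltnS leq_eqVlt.
      have -> : (nat_of_ord i == k) = false.
        by apply/negP => /eqP E; apply: Hne; apply: val_inj.
      by [].
    rewrite E1 E2; exact: RT_ctx.
  - have -> : c k.+1 = c k.
      apply: functional_extensionality => i; rewrite /c.
      have h1 : (i < k)%N by apply: leq_trans (ltn_ord i) Hk.
      by rewrite h1 (ltn_trans h1 (ltnSn k)).
    exact: rtc_refl.
have -> : b = c (sar o).
  by apply: functional_extensionality => i; rewrite /c ltn_ord.
exact: Hc.
Qed.

Lemma cjoin_RT : subrel (cjoin R1 R2) RT.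
Proof.
apply: Cg_min; first exact: RT_cong.
by move=> x y H; apply: rtc_one.
Qed.

End RT.

Section Free.
Variables (S : signature) (A : algebra S).

Definition fcar := {f : (nat -> A) -> A | exists t : term S nat, forall e, f e = eval e t}.

Definition fterm (f : fcar) : term S nat :=
  proj1_sig (constructive_indefinite_description _ (proj2_sig f)).

Lemma fterm_spec (f : fcar) e : proj1_sig f e = eval e (fterm f).
Proof.
rewrite /fterm; case: (constructive_indefinite_description _ _) => t Ht /=; exact: Ht.
Qed.

Definition F_interp (o : sop S) (args : 'I_(sar o) -> fcar) : fcar.
Proof.
exists (fun e => @interp S A o (fun i => proj1_sig (args i) e)).
exists (tapp (fun i => fterm (args i))) => e /=.
congr (@interp S A o _); apply: functional_extensionality => i; exact: fterm_spec.
Defined.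

Definition Falg : algebra S := @Algebra S fcar F_interp.

Lemma eval_F X (E : X -> Falg) t env :
  proj1_sig (eval E t) env = eval (fun x => proj1_sig (E x) env) t.
Proof.
elim: t => [x|o ts IH] //=.
congr (@interp S A o _); apply: functional_extensionality => i; exact: IH.
Qed.

Lemma F_in_variety (Sigma : identities S) : in_variety Sigma A -> in_variety Sigma Falg.
Proof.
move=> HA s t Hst e; apply: sig_eq; apply: functional_extensionality => env.
by rewrite !eval_F (HA s t Hst).
Qed.

Definition fproj (k : nat) : Falg.
Proof. exists (fun e : nat -> A => e k); by exists (tvar S k). Defined.

Definition Kr (s : nat -> nat) : crel Falg :=
  fun f g => forall env : nat -> A, proj1_sig f (fun k => env (s k)) = proj1_sig g (fun k => env (s k)).

Lemma Kr_cong s : is_congruence (Kr s).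
Proof.
rewrite /Kr; split; first by [].
split; first by move=> x y H env; rewrite H.
split; first by move=> x y z H H' env; rewrite H H'.
move=> o a b H env /=; congr (@interp S A o _); apply: functional_extensionality => i; exact: H.
Qed.

Definition s1 (k : nat) : nat := match k with 1 => 0 | 3 => 2 | k => k end.
Definition s2 (k : nat) : nat := match k with 2 => 1 | k => k end.
Definition s3 (k : nat) : nat := match k with 2 => 1 | 3 => 0 | k => k end.

Lemma K2_K3 : subrel (Kr s2) (Kr s3).
Proof.
move=> f g H env; have := H (fun k => env (s3 k)).
have -> : (fun k => env (s3 (s2 k))) = (fun k => env (s3 k)).
  by apply: functional_extensionality => -[|[|[|[|k]]]].
by [].
Qed.

Definition DayR : crel Falg := fun f g => Kr s2 f g \/ (Kr s1 f g /\ Kr s3 f g).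

Lemma Day_chain (Sigma : identities S) :
  congruence_modular Sigma -> in_variety Sigma A ->
  rtc DayR (fproj 0) (fproj 3).
Proof.
move=> Hmod HA.
have HF := F_in_variety HA.
have M := Hmod Falg HF (Kr s2) (Kr s1) (Kr s3) (Kr_cong _) (Kr_cong _) (Kr_cong _) K2_K3.
have H03 : cmeet (cjoin (Kr s2) (Kr s1)) (Kr s3) (fproj 0) (fproj 3).
  split; last by [].
  have J := cjoin_cong (Kr s2) (Kr s1).
  apply: (cong_trans J (y := fproj 1)); first by apply: cjoin_r.
  apply: (cong_trans J (y := fproj 2)); first by apply: cjoin_l.
  by apply: cjoin_r.
have := (proj2 (M _ _) H03).
move/(cjoin_RT (Kr_cong s2) (cmeet_cong (Kr_cong s1) (Kr_cong s3))).
by [].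
Qed.

End Free.


Section Phi.
Variables (S : signature) (N : algebra S) (D : N -> Prop).

Definition upd (E : nat -> N) (U : N) : nat -> N := fun k => if k is 0 then U else E k.

Definition Phi : crel N := fun U V =>
  forall (t : term S nat) (E : nat -> N), D (eval (upd E U) t) <-> D (eval (upd E V) t).

Lemma Phi_ctx (o : sop S) (f : 'I_(sar o) -> N) (i0 : 'I_(sar o)) w w' :
  Phi w w' -> Phi (@interp S N o (fun i => if i == i0 then w else f i))
                  (@interp S N o (fun i => if i == i0 then w' else f i)).
Proof.
move=> H t E.
pose n := sar o.
pose sg : nat -> term S nat := fun k =>
  if k is k'.+1 then tvar S (k'.+1 + n)
  else tapp (fun i : 'I_(sar o) => if i == i0 then tvar S 0 else tvar S (nat_of_ord i).+1).
pose E' : nat -> N := fun m => if m is m'.+1 then (if (m' < n)%N then f (insubd i0 m') else E (m' - n).+1) else w.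
have key : forall X, (fun k => eval (upd E' X) (sg k)) = upd E (@interp S N o (fun i => if i == i0 then X else f i)).
  move=> X; apply: functional_extensionality => -[|k] /=.
  - congr (@interp S N o _); apply: functional_extensionality => i.
    case: (i == i0) => //=.
    rewrite ltn_ord; congr (f _); apply: val_inj; by rewrite val_insubd ltn_ord.
  - rewrite /= ltnNge leq_addl /=; by rewrite addnK.
have := H (tsubst sg t) E'.
by rewrite !eval_subst !key.
Qed.

Lemma Phi_cong : is_congruence Phi.
Proof.
split; first by [].
split; first by move=> x y H t E; split => h; apply/(H t E).
split; first by move=> x y z H1 H2 t E; split => h; [apply/(H2 t E)/(H1 t E) | apply/(H1 t E)/(H2 t E)].
move=> o a b Hab.
pose c (k : nat) := fun i : 'I_(sar o) => if (i < k)%N then b i else a i.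
have Ptrans : forall x y z, Phi x y -> Phi y z -> Phi x z.
  by move=> x y z H1 H2 t E; split => h; [apply/(H2 t E)/(H1 t E) | apply/(H1 t E)/(H2 t E)].
have Hc : forall k, Phi (@interp S N o a) (@interp S N o (c k)).
  elim=> [|k IH].
    have -> : c 0 = a by apply: functional_extensionality => i.
    by [].
  apply: (Ptrans _ _ _ IH).
  case: (ltnP k (sar o)) => Hk.
  - pose i0 := Ordinal Hk.
    have E1 : c k = (fun i => if i == i0 then a i0 else c k i).
      apply: functional_extensionality => i; case: eqP => // ->; by rewrite /c /= ltnn.
    have E2 : c k.+1 = (fun i => if i == i0 then b i0 else c k i).
      apply: functional_extensionality => i; case: eqP => [->|Hne]; first by rewrite /c /= ltnSn.
      rewrite /c ltnS leq_eqVlt.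
      have -> : (nat_of_ord i == k) = false.
        by apply/negP => /eqP E; apply: Hne; apply: val_inj.
      by [].
    rewrite E1 E2; exact: Phi_ctx.
  - have -> : c k.+1 = c k.
      apply: functional_extensionality => i; rewrite /c.
      have h1 : (i < k)%N by apply: leq_trans (ltn_ord i) Hk.
      by rewrite h1 (ltn_trans h1 (ltnSn k)).
    by [].
have -> : b = c (sar o).
  by apply: functional_extensionality => i; rewrite /c ltn_ord.
exact: Hc.
Qed.

Lemma Phi_D U V : Phi U V -> D U -> D V.
Proof. by move=> H; have := H (tvar S 0) (fun _ => U) => /= -[]. Qed.

Lemma Phi_sup (R : crel N) : is_congruence R -> (forall U V, R U V -> D U -> D V) -> subrel R Phi.
Proof.
move=> HR HD U V H t E.
have H' : R (eval (upd E U) t) (eval (upd E V) t).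
  by apply: cong_eval => // -[|k] //=; apply: cong_refl.
split; first exact: HD.
by apply: HD; apply: cong_sym.
Qed.

End Phi.


Section DayTools.
Variables (S : signature) (A : algebra S).

Definition env4 (a b c d : A) : nat -> A :=
  fun k => match k with 0 => a | 1 => b | 2 => c | 3 => d | _ => a end.

Lemma K3_app (f : Falg A) : Kr s3 f (fproj A 0) -> forall a b, proj1_sig f (env4 a b b a) = a.
Proof.
move=> H a b; have := H (env4 a b b a).
have -> : (fun k => env4 a b b a (s3 k)) = env4 a b b a.
  by apply: functional_extensionality => -[|[|[|[|k]]]].
by [].
Qed.

Lemma K2_app (f g : Falg A) : Kr s2 f g -> forall a b d, proj1_sig f (env4 a b b d) = proj1_sig g (env4 a b b d).
Proof.
move=> H a b d; have := H (env4 a b b d).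
have -> : (fun k => env4 a b b d (s2 k)) = env4 a b b d.
  by apply: functional_extensionality => -[|[|[|[|k]]]].
by [].
Qed.

Lemma K1_app (f g : Falg A) : Kr s1 f g -> forall a c, proj1_sig f (env4 a a c c) = proj1_sig g (env4 a a c c).
Proof.
move=> H a c; have := H (env4 a a c c).
have -> : (fun k => env4 a a c c (s1 k)) = env4 a a c c.
  by apply: functional_extensionality => -[|[|[|[|k]]]].
by [].
Qed.

Lemma f_compat (R : crel A) (f : Falg A) : is_congruence R ->
  forall e e', (forall k, R (e k) (e' k)) -> R (proj1_sig f e) (proj1_sig f e').
Proof. move=> HR e e' H; rewrite !fterm_spec; exact: cong_eval. Qed.

Lemma env4_rel (R : crel A) : is_congruence R -> forall a b c d a' b' c' d',
  R a a' -> R b b' -> R c c' -> R d d' -> forall k, R (env4 a b c d k) (env4 a' b' c' d' k).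
Proof. by move=> HR a b c d a' b' c' d' h1 h2 h3 h4 [|[|[|[|k]]]]. Qed.

Lemma Day_ind (Sigma : identities S) : congruence_modular Sigma -> in_variety Sigma A ->
  forall Q : crel (Falg A), (forall f, Q f f) -> (forall f g h, Q f g -> Q g h -> Q f h) ->
  (forall f g, Kr s3 f (fproj A 0) -> Kr s3 g (fproj A 0) -> DayR f g -> Q f g) ->
  Q (fproj A 0) (fproj A 3).
Proof.
move=> Hmod HA Q Qr Qt Qs.
have K3c := Kr_cong A s3.
suff: forall f g, rtc (@DayR S A) f g -> Kr s3 f (fproj A 0) -> Q f g /\ Kr s3 g (fproj A 0).
  move=> H; exact: (proj1 (H _ _ (Day_chain Hmod HA) (cong_refl K3c _))).
move=> f g; elim=> [x|x y z Hxy _ IH] Hx; first by split.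
have Hy : Kr s3 y (fproj A 0).
  refine (cong_trans K3c _ Hx); apply: (cong_sym K3c).
  case: Hxy => [H|[_ H]] //; exact: K2_K3.
have [Q1 Q2] := IH Hy; split => //.
apply: Qt Q1; exact: Qs.
Qed.

End DayTools.

Section OnM.
Variables (S : signature) (Sigma : identities S) (Hmod : congruence_modular Sigma)
  (A : algebra S) (HA : in_variety Sigma A) (bt : crel A) (Hb : is_congruence bt).

Local Notation M := (subalg Hb).

Definition fM (f : Falg A) (E : nat -> M) : M.
Proof.
exists (proj1_sig f (fun k => (proj1_sig (E k)).1), proj1_sig f (fun k => (proj1_sig (E k)).2)).
apply: f_compat => // k; exact: (proj2_sig (E k)).
Defined.

Lemma fM_term f E : fM f E = eval E (fterm f).
Proof. by apply: sig_eq; rewrite eval_sub /= !fterm_spec. Qed.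

Lemma fM_compat (R : crel M) f : is_congruence R -> forall E E', (forall k, R (E k) (E' k)) -> R (fM f E) (fM f E').
Proof. move=> HR E E' H; rewrite !fM_term; exact: cong_eval. Qed.

Definition env4M (a b c d : M) : nat -> M :=
  fun k => match k with 0 => a | 1 => b | 2 => c | 3 => d | _ => a end.

Lemma fM_env4 f (a b c d : M) : proj1_sig (fM f (env4M a b c d)) =
  (proj1_sig f (env4 (proj1_sig a).1 (proj1_sig b).1 (proj1_sig c).1 (proj1_sig d).1),
   proj1_sig f (env4 (proj1_sig a).2 (proj1_sig b).2 (proj1_sig c).2 (proj1_sig d).2)).
Proof.
rewrite /=; congr (_, _); congr (proj1_sig f _); by apply: functional_extensionality => -[|[|[|[|k]]]].
Qed.

Lemma env4M_rel (R : crel M) : is_congruence R -> forall a b c d a' b' c' d',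
  R a a' -> R b b' -> R c c' -> R d d' -> forall k, R (env4M a b c d k) (env4M a' b' c' d' k).
Proof. by move=> HR a b c d a' b' c' d' h1 h2 h3 h4 [|[|[|[|k]]]]. Qed.

Lemma pair_eta (X Y : Type) (p : X * Y) : (p.1, p.2) = p.
Proof. by case: p. Qed.

Lemma shiftM (al be ga : crel M) : is_congruence al -> is_congruence be -> is_congruence ga ->
  (forall X Y, al X Y -> be X Y -> ga X Y) ->
  forall x y u z, be x y -> be u z -> al x u -> al y z -> ga x u -> ga y z.
Proof.
move=> Hal Hbe Hga Hm x y u z Bxy Buz Axu Ayz Gxu.
pose Q : crel (Falg A) := fun f g => ga (fM f (env4M y x u z)) (fM g (env4M y x u z)).
have : Q (fproj A 0) (fproj A 3).
  apply: (Day_ind Hmod HA).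
  - move=> f; exact: (cong_refl Hga).
  - move=> f g h; exact: (cong_trans Hga).
  move=> f g Kf Kg Hfg.
  have Aef : forall h, Kr s3 h (fproj A 0) -> al (fM h (env4M y x u z)) y.
    move=> h Kh.
    have Ey : fM h (env4M y x x y) = y.
      apply: sig_eq; rewrite fM_env4 !K3_app //; by case: (proj1_sig y).
    apply: (cong_trans Hal (y := fM h (env4M y x x y))); last by rewrite Ey; apply: (cong_refl Hal).
    apply: fM_compat => //; apply: env4M_rel => //; try exact: (cong_refl Hal); exact: (cong_sym Hal).
  case: Hfg => [K2|[K1 _]].
  + rewrite /Q.
    apply: (cong_trans Hga (y := fM f (env4M y x x z))).
      apply: fM_compat => //; apply: env4M_rel => //;
      first [ exact: (cong_refl Hga) | exact: (cong_sym Hga Gxu) ].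
    have -> : fM f (env4M y x x z) = fM g (env4M y x x z).
      apply: sig_eq; rewrite !fM_env4; by rewrite !(K2_app K2).
    apply: fM_compat => //; apply: env4M_rel => //; exact: (cong_refl Hga).
  + apply: Hm.
    * exact: (cong_trans Hal (Aef f Kf) (cong_sym Hal (Aef g Kg))).
    * apply: (cong_trans Hbe (y := fM f (env4M y y z z))).
        apply: fM_compat => //; apply: env4M_rel => //; exact: (cong_refl Hbe).
      have -> : fM f (env4M y y z z) = fM g (env4M y y z z).
        apply: sig_eq; rewrite !fM_env4; by rewrite !(K1_app K1).
      apply: fM_compat => //; apply: env4M_rel => //;
      first [ exact: (cong_refl Hbe) | exact: (cong_sym Hbe Bxy) | exact: (cong_sym Hbe Buz) ].
rewrite /Q.
have E0 : fM (fproj A 0) (env4M y x u z) = y by apply: sig_eq; rewrite fM_env4 /=; by case: (proj1_sig y).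
have E3 : fM (fproj A 3) (env4M y x u z) = z by apply: sig_eq; rewrite fM_env4 /=; by case: (proj1_sig z).
by rewrite E0 E3.
Qed.

End OnM.


Section OnM2.
Variables (S : signature) (Sigma : identities S) (Hmod : congruence_modular Sigma)
  (A : algebra S) (HA : in_variety Sigma A) (bt : crel A) (Hb : is_congruence bt).

Local Notation M := (subalg Hb).

Definition Dk (k : crel A) : M -> Prop := fun U => k (proj1_sig U).1 (proj1_sig U).2.
Definition PhiK (k : crel A) : crel M := Phi (Dk k).

Definition sw (k : nat) : term S nat := match k with 0 => tvar S 1 | 1 => tvar S 0 | k => tvar S k end.

Lemma poly_Phi (k : crel A) (f : Falg A) (C1 C2 C3 U V : M) :
  PhiK k U V -> Dk k (fM f (env4M C1 U C2 C3)) -> Dk k (fM f (env4M C1 V C2 C3)).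
Proof.
move=> H.
have E : forall W, eval (upd (env4M C1 C1 C2 C3) W) (tsubst sw (fterm f)) = fM f (env4M C1 W C2 C3).
  move=> W; rewrite eval_subst fM_term; apply: eval_ext => -[|[|[|[|j]]]] //.
rewrite -!E; exact: (proj1 (H _ _)).
Qed.

Lemma L1 (k : crel A) : is_congruence k -> forall U V : M, PhiK k U V ->
  (proj1_sig U).2 = (proj1_sig V).2 -> k (proj1_sig U).1 (proj1_sig V).1.
Proof.
move=> Hk U V H E2.
case: U H E2 => [[p q] hU] H /= E2; case: V H E2 => [[p' q'] hV] H /= E2; subst q'.
simpl in hU, hV.
have bpp' : bt p p' := cong_trans Hb hU (cong_sym Hb hV).
have key : forall f : Falg A, Kr s3 f (fproj A 0) ->
    k (proj1_sig f (env4 p p' p' p')) (proj1_sig f (env4 p p p' p')).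
  move=> f Kf.
  pose e := proj1_sig f (env4 p p p' p').
  have bpe : bt p e.
    apply: (cong_sym Hb).
    have : bt (proj1_sig f (env4 p p p' p')) (proj1_sig f (env4 p p p p)).
      apply: (f_compat f Hb); apply: env4_rel => //; try exact: (cong_refl Hb); exact: (cong_sym Hb bpp').
    by rewrite (K3_app Kf p p).
  have bp'e : bt p' e := cong_trans Hb (cong_sym Hb bpp') bpe.
  pose C1 := spair Hb bpe. pose C2 := spair Hb hV. pose C3 := spair Hb bp'e.
  have := @poly_Phi k f C1 C2 C3 _ _ H.
  rewrite /Dk !fM_env4 /= (K3_app Kf e q) => h.
  exact: (h (cong_refl Hk _)).
pose Q : crel (Falg A) := fun f g => k (proj1_sig f (env4 p p' p' p')) (proj1_sig g (env4 p p' p' p')).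
have : Q (fproj A 0) (fproj A 3).
  apply: (Day_ind Hmod HA).
  - move=> f; exact: (cong_refl Hk).
  - move=> f g h; exact: (cong_trans Hk).
  move=> f g Kf Kg [K2|[K1 _]].
  - rewrite /Q (K2_app K2); exact: (cong_refl Hk).
  - rewrite /Q; apply: (cong_trans Hk (key f Kf)); rewrite (K1_app K1).
    exact: (cong_sym Hk (key g Kg)).
by [].
Qed.

Lemma L0 (k : crel A) : is_congruence k -> forall U V : M, PhiK k U V ->
  (proj1_sig U).1 = (proj1_sig V).1 -> k (proj1_sig U).2 (proj1_sig V).2.
Proof.
move=> Hk U V H E1.
case: U H E1 => [[p q] hU] H /= E1; case: V H E1 => [[p' q'] hV] H /= E1; subst p'.
simpl in hU, hV.
have bqq' : bt q q' := cong_trans Hb (cong_sym Hb hU) hV.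
have key : forall f : Falg A, Kr s3 f (fproj A 0) ->
    k (proj1_sig f (env4 q q' q' q')) (proj1_sig f (env4 q q q' q')).
  move=> f Kf.
  pose e := proj1_sig f (env4 q q q' q').
  have beq : bt e q.
    have : bt (proj1_sig f (env4 q q q' q')) (proj1_sig f (env4 q q q q)).
      apply: (f_compat f Hb); apply: env4_rel => //; try exact: (cong_refl Hb); exact: (cong_sym Hb bqq').
    by rewrite (K3_app Kf q q).
  have beq' : bt e q' := cong_trans Hb beq bqq'.
  pose C1 := spair Hb beq. pose C2 := spair Hb hV. pose C3 := spair Hb beq'.
  have := @poly_Phi k f C1 C2 C3 _ _ H.
  rewrite /Dk !fM_env4 /= (K3_app Kf e p) => h.
  exact: (cong_sym Hk (h (cong_refl Hk _))).
pose Q : crel (Falg A) := fun f g => k (proj1_sig f (env4 q q' q' q')) (proj1_sig g (env4 q q' q' q')).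
have : Q (fproj A 0) (fproj A 3).
  apply: (Day_ind Hmod HA).
  - move=> f; exact: (cong_refl Hk).
  - move=> f g h; exact: (cong_trans Hk).
  move=> f g Kf Kg [K2|[K1 _]].
  - rewrite /Q (K2_app K2); exact: (cong_refl Hk).
  - rewrite /Q; apply: (cong_trans Hk (key f Kf)); rewrite (K1_app K1).
    exact: (cong_sym Hk (key g Kg)).
by [].
Qed.

End OnM2.


Section OnM3.
Variables (S : signature) (A : algebra S) (bt : crel A) (Hb : is_congruence bt).

Local Notation M := (subalg Hb).
Local Notation PK d := (@PhiK S A bt Hb d).
Local Notation DK d := (@Dk S A bt Hb d).

Definition diag (a : A) : M := spair Hb (cong_refl Hb a).

Definition Rdiag (d : crel A) : crel A := fun a b => PK d (diag a) (diag b).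

Lemma Rdiag_cong d : is_congruence (Rdiag d).
Proof.
have HP := Phi_cong (DK d).
split; first by move=> x; apply: (cong_refl HP).
split; first by move=> x y; apply: (cong_sym HP).
split; first by move=> x y z; apply: (cong_trans HP).
move=> o a b H.
have E : forall c : 'I_(sar o) -> A, diag (@interp S A o c) = @interp S M o (fun i => diag (c i)).
  by move=> c; apply: sig_eq.
rewrite /Rdiag !E; apply: (cong_comp HP) => i; exact: H.
Qed.

Definition hat (d : crel A) : crel M := fun U V =>
  d (proj1_sig U).1 (proj1_sig V).1 /\ d (proj1_sig U).2 (proj1_sig V).2.

Lemma hat_cong d : is_congruence d -> is_congruence (hat d).
Proof.
move=> Hd; split; first by move=> x; split; apply: (cong_refl Hd).
split; first by move=> x y [] h1 h2; split; apply: (cong_sym Hd).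
split; first by move=> x y z [] h1 h2 [] h3 h4; split; [exact: (cong_trans Hd h1 h3)|exact: (cong_trans Hd h2 h4)].
move=> o a b H; split; apply: (cong_comp Hd) => i; by case: (H i).
Qed.

Lemma hat_Phi d : is_congruence d -> subrel (hat d) (PK d).
Proof.
move=> Hd; apply: Phi_sup; first exact: hat_cong.
move=> U V [h1 h2] hU; rewrite /Dk.
exact: (cong_trans Hd (cong_trans Hd (cong_sym Hd h1) hU) h2).
Qed.

Lemma delta_Rdiag d : is_congruence d -> subrel d (Rdiag d).
Proof. move=> Hd a b h; apply: hat_Phi => //; by split. Qed.

Definition eta0 : crel M := fun U V => (proj1_sig U).1 = (proj1_sig V).1.
Definition eta1 : crel M := fun U V => (proj1_sig U).2 = (proj1_sig V).2.

Lemma eta0_cong : is_congruence eta0.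
Proof.
rewrite /eta0; split; first by [].
split; first by move=> x y ->.
split; first by move=> x y z -> ->.
move=> o a b H /=; congr (@interp S A o _); apply: functional_extensionality => i; exact: H.
Qed.

Lemma eta1_cong : is_congruence eta1.
Proof.
rewrite /eta1; split; first by [].
split; first by move=> x y ->.
split; first by move=> x y z -> ->.
move=> o a b H /=; congr (@interp S A o _); apply: functional_extensionality => i; exact: H.
Qed.

Definition lift0 : nat -> term S (nat + nat) := fun k => if k is 0 then tvar S (inl 0) else tvar S (inr k).

Lemma C_to_G (al d : crel A) : is_congruence al -> centralizes al bt d -> subrel al (Rdiag d).
Proof.
move=> Hal HC a b hab t E.
rewrite /Dk !eval_sub /=.
pose u := fun k => (proj1_sig (E k)).1.
pose v := fun k => (proj1_sig (E k)).2.
have Huv : forall j, bt (u j) (v j) by move=> j; exact: (proj2_sig (E j)).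
have E1 : forall w, eval (fun k => (proj1_sig (upd E (diag w) k)).1) t = eval (envsum (fun _ => w) u) (tsubst lift0 t).
  by move=> w; rewrite eval_subst; apply: eval_ext => -[|k].
have E2 : forall w, eval (fun k => (proj1_sig (upd E (diag w) k)).2) t = eval (envsum (fun _ => w) v) (tsubst lift0 t).
  by move=> w; rewrite eval_subst; apply: eval_ext => -[|k].
rewrite !E1 !E2; split.
- apply: HC => // i; exact: hab.
- apply: HC => // i; exact: (cong_sym Hal hab).
Qed.

Lemma G_to_C (al d : crel A) : subrel al (Rdiag d) -> centralizes al bt d.
Proof.
move=> HG t x y u v Hxy Huv H.
pose EX := fun z => match z with inl i => diag (x i) | inr j => spair Hb (Huv j) end.
pose EY := fun z => match z with inl i => diag (y i) | inr j => spair Hb (Huv j) end.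
have HP := Phi_cong (DK d).
have R : PK d (eval EX t) (eval EY t).
  apply: (cong_eval HP) => -[i|j] /=; [exact: HG | exact: (cong_refl HP)].
have := Phi_D R; rewrite /Dk !eval_sub /=.
have -> : (fun z => (proj1_sig (EX z)).1) = envsum x u by apply: functional_extensionality => -[].
have -> : (fun z => (proj1_sig (EX z)).2) = envsum x v by apply: functional_extensionality => -[].
have -> : (fun z => (proj1_sig (EY z)).1) = envsum y u by apply: functional_extensionality => -[].
have -> : (fun z => (proj1_sig (EY z)).2) = envsum y v by apply: functional_extensionality => -[].
by apply.
Qed.

End OnM3.


Section CM.
Variables (S : signature) (Sigma : identities S) (Hmod : congruence_modular Sigma)
  (A : algebra S) (HA : in_variety Sigma A).

Lemma Up (al bt k d : crel A) : is_congruence al -> forall Hb : is_congruence bt, is_congruence k -> is_congruence d ->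
  centralizes al bt k -> subrel k d -> centralizes al bt d.
Proof.
move=> Hal Hb Hk Hd HC Hkd t x y u v Hxy Huv H.
pose EX := fun z => match z with inl i => diag Hb (x i) | inr j => spair Hb (Huv j) end.
pose EY := fun z => match z with inl i => diag Hb (y i) | inr j => spair Hb (Huv j) end.
have VX : proj1_sig (eval EX t) = (eval (envsum x u) t, eval (envsum x v) t).
  rewrite eval_sub; congr (_, _); apply: eval_ext => -[] //.
have VY : proj1_sig (eval EY t) = (eval (envsum y u) t, eval (envsum y v) t).
  rewrite eval_sub; congr (_, _); apply: eval_ext => -[] //.
have HG := C_to_G (Hb:=Hb) Hal HC.
have HP := Phi_cong (@Dk S A bt Hb k).
have XY : @PhiK S A bt Hb k (eval EX t) (eval EY t).
  apply: (cong_eval HP) => -[i|j] /=; [exact: HG | exact: (cong_refl HP)].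
have aQT : al (eval (envsum x v) t) (eval (envsum y v) t).
  apply: (cong_eval Hal) => -[i|j] /=; [exact: Hxy | exact: (cong_refl Hal)].
have Hm : forall X Y, @eta1 S A bt Hb X Y -> @PhiK S A bt Hb k X Y -> @hat S A bt Hb d X Y.
  move=> X Y h1 h2; split; last by rewrite h1; exact: (cong_refl Hd).
  apply: Hkd; exact: (L1 Hmod HA Hk h2 h1).
have a1 : @eta1 S A bt Hb (diag Hb (eval (envsum x v) t)) (eval EX t) by rewrite /eta1 VX.
have a2 : @eta1 S A bt Hb (diag Hb (eval (envsum y v) t)) (eval EY t) by rewrite /eta1 VY.
have g1 : @hat S A bt Hb d (diag Hb (eval (envsum x v) t)) (eval EX t).
  rewrite /hat VX /=; split; [exact: (cong_sym Hd H) | exact: (cong_refl Hd)].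
have := @shiftM S Sigma Hmod A HA bt Hb (@eta1 S A bt Hb) (@PhiK S A bt Hb k) (@hat S A bt Hb d)
  (eta1_cong Hb) HP (hat_cong Hb Hd) Hm
  (diag Hb (eval (envsum x v) t)) (diag Hb (eval (envsum y v) t)) (eval EX t) (eval EY t)
  (HG _ _ aQT) XY a1 a2 g1.
rewrite /hat VY /= => -[h _]; exact: (cong_sym Hd h).
Qed.

Lemma Sym (al bt d : crel A) : is_congruence al -> forall Hb : is_congruence bt, is_congruence d ->
  centralizes al bt d -> centralizes bt al d.
Proof.
move=> Hal Hb Hd HC t x y u v Hxy Huv H.
pose EX := fun z => match z with inl i => spair Hb (Hxy i) | inr j => diag Hb (u j) end.
pose EY := fun z => match z with inl i => spair Hb (Hxy i) | inr j => diag Hb (v j) end.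
have VX : proj1_sig (eval EX t) = (eval (envsum x u) t, eval (envsum y u) t).
  rewrite eval_sub; congr (_, _); apply: eval_ext => -[] //.
have VY : proj1_sig (eval EY t) = (eval (envsum x v) t, eval (envsum y v) t).
  rewrite eval_sub; congr (_, _); apply: eval_ext => -[] //.
have HG := C_to_G (Hb:=Hb) Hal HC.
have HP := Phi_cong (@Dk S A bt Hb d).
have XY : @PhiK S A bt Hb d (eval EX t) (eval EY t).
  apply: (cong_eval HP) => -[i|j] /=; [exact: (cong_refl HP) | exact: HG].
have aPQ : al (eval (envsum x u) t) (eval (envsum x v) t).
  apply: (cong_eval Hal) => -[i|j] /=; [exact: (cong_refl Hal) | exact: Huv].
have Hm : forall X Y, @PhiK S A bt Hb d X Y -> @eta0 S A bt Hb X Y -> @hat S A bt Hb d X Y.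
  move=> X Y h1 h2; split; first by rewrite h2; exact: (cong_refl Hd).
  exact: (L0 Hmod HA Hd h1 h2).
have b1 : @eta0 S A bt Hb (diag Hb (eval (envsum x u) t)) (eval EX t) by rewrite /eta0 VX.
have b2 : @eta0 S A bt Hb (diag Hb (eval (envsum x v) t)) (eval EY t) by rewrite /eta0 VY.
have g1 : @hat S A bt Hb d (diag Hb (eval (envsum x u) t)) (diag Hb (eval (envsum x v) t)).
  by rewrite /hat /=; split.
have := @shiftM S Sigma Hmod A HA bt Hb (@PhiK S A bt Hb d) (@eta0 S A bt Hb) (@hat S A bt Hb d)
  HP (eta0_cong Hb) (hat_cong Hb Hd) Hm
  (diag Hb (eval (envsum x u) t)) (eval EX t) (diag Hb (eval (envsum x v) t)) (eval EY t)
  b1 b2 (HG _ _ aPQ) XY g1.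
by rewrite /hat VX VY /= => -[_ h].
Qed.

End CM.


Section Core.
Variables (S : signature) (Sigma : identities S) (Hmod : congruence_modular Sigma)
  (Hsemi : semidegenerate Sigma) (A : algebra S) (HA : in_variety Sigma A).

Lemma semideg_delta (d : crel A) : is_congruence d ->
  (forall a b, Rdiag (Nabla_cong A) d a b) -> forall a b, d a b.
Proof.
move=> Hd HR a b.
pose HN := Nabla_cong A.
pose Ph := @PhiK S A (@Nabla S A) HN d.
have HP : is_congruence Ph := Phi_cong _.
pose B := quotient Ph.
have HB : in_variety Sigma B.
  apply: (quot_in_variety HP); exact: sub_in_variety.
pose x : B := qproj Ph (diag HN a).
have Hx : forall o : sop S, @interp S B o (fun _ => x) = x.
  move=> o; rewrite /= /x; apply/(qproj_eq HP).
  apply: (cong_trans HP (y := @interp S (subalg HN) o (fun _ => diag HN a))).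
    apply: (cong_comp HP) => i; exact: (qrep_qproj HP).
  have -> : @interp S (subalg HN) o (fun _ => diag HN a) = diag HN (@interp S A o (fun _ => a)).
    by apply: sig_eq.
  exact: (HR (@interp S A o (fun _ => a)) a).
have E := Hsemi HB (ex_intro _ x Hx) (qproj Ph (@spair S A (@Nabla S A) HN a b I)) x.
move/(qproj_eq HP): E => E.
exact: (Phi_D (cong_sym HP E) (cong_refl Hd a)).
Qed.

Lemma core (x y : crel A) : is_congruence x -> is_congruence y ->
  rel_eq (cjoin x y) (@Nabla S A) -> subrel x (cjoin (commutator x x) y).
Proof.
move=> Hx Hy Hj.
pose d := cjoin (commutator x x) y.
have Hd : is_congruence d := cjoin_cong _ _.
have C1 : centralizes x x d.
  apply: (Up Hmod HA Hx Hx (comm_cong x x) Hd (@comm_C S A x x)); exact: cjoin_l.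
have yd : subrel y d by apply: cjoin_r.
have G1 : subrel (@Nabla S A) (Rdiag Hx d).
  move=> a b h; apply: (cjoin_min (Rdiag_cong Hx d) (C_to_G (Hb:=Hx) Hx C1)).
    move=> u v huv; apply: (delta_Rdiag Hd); exact: (yd u v huv).
  by apply/Hj.
have C2 : centralizes (@Nabla S A) x d := G_to_C G1.
have C3 : centralizes x (@Nabla S A) d := Sym Hmod HA (Nabla_cong A) Hx Hd C2.
have G2 : forall a b, Rdiag (Nabla_cong A) d a b.
  move=> a b; apply: (cjoin_min (Rdiag_cong (Nabla_cong A) d) (C_to_G (Hb:=Nabla_cong A) Hx C3)).
    move=> u v huv; apply: (delta_Rdiag Hd); exact: (yd u v huv).
  by apply/Hj.
move=> a b _; exact: (semideg_delta Hd G2).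
Qed.

End Core.


Section Pull.
Variables (S : signature) (A : algebra S) (th : crel A) (Hth : is_congruence th).
Local Notation Q := (quotient th).

Definition pull (b : crel Q) : crel A := fun x y => b (qproj th x) (qproj th y).

Lemma pull_cong b : is_congruence b -> is_congruence (pull b).
Proof.
move=> Hb; rewrite /pull; split; first by move=> x; apply: (cong_refl Hb).
split; first by move=> x y; apply: (cong_sym Hb).
split; first by move=> x y z; apply: (cong_trans Hb).
move=> o a c H; rewrite -!(interp_quot Hth); exact: (cong_comp Hb).
Qed.

Lemma th_pull b : is_congruence b -> subrel th (pull b).
Proof.
move=> Hb x y h; rewrite /pull; have -> : qproj th x = qproj th y by apply/(qproj_eq Hth).
exact: (cong_refl Hb).
Qed.

Lemma pull_meet b b' : rel_eq (cmeet b b') (@Delta S Q) -> subrel (cmeet (pull b) (pull b')) th.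
Proof.
move=> Hm x y [h1 h2]; have : @Delta S Q (qproj th x) (qproj th y) by apply/Hm.
by move/(qproj_eq Hth).
Qed.

Lemma pull_join b b' : is_congruence b -> is_congruence b' ->
  rel_eq (cjoin b b') (@Nabla S Q) -> rel_eq (cjoin (pull b) (pull b')) (@Nabla S A).
Proof.
move=> Hb Hb' Hj x y; split => // _.
pose J := cjoin (pull b) (pull b').
have HJ : is_congruence J := cjoin_cong _ _.
have thJ : subrel th J by move=> u v h; apply: cjoin_l; exact: th_pull.
pose R : crel Q := fun X Y => J (qrep X) (qrep Y).
have HR : is_congruence R.
  rewrite /R; split; first by move=> X; apply: (cong_refl HJ).
  split; first by move=> X Y; apply: (cong_sym HJ).
  split; first by move=> X Y Z; apply: (cong_trans HJ).
  move=> o a c H /=.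
  apply: (cong_trans HJ (thJ _ _ (qrep_qproj Hth _))).
  apply: (cong_trans HJ); last by apply: (cong_sym HJ); exact: (thJ _ _ (qrep_qproj Hth _)).
  exact: (cong_comp HJ).
have bR : subrel b R.
  move=> X Y h; apply: cjoin_l; by rewrite /pull !qproj_qrep.
have b'R : subrel b' R.
  move=> X Y h; apply: cjoin_r; by rewrite /pull !qproj_qrep.
have : R (qproj th x) (qproj th y).
  apply: (cjoin_min HR bR b'R); by apply/Hj.
rewrite /R => h.
apply: (cong_trans HJ (cong_sym HJ (thJ _ _ (qrep_qproj Hth x)))).
exact: (cong_trans HJ h (thJ _ _ (qrep_qproj Hth y))).
Qed.

End Pull.

Section Main.
Variables (S : signature) (Sigma : identities S) (Hmod : congruence_modular Sigma)
  (Hsemi : semidegenerate Sigma) (A : algebra S) (HA : in_variety Sigma A).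

Lemma iterate (al al' : crel A) : is_congruence al -> is_congruence al' ->
  rel_eq (cjoin al al') (@Nabla S A) -> forall k, subrel al (cjoin (comm_pow al k) al').
Proof.
move=> Ha Ha' Hj; elim=> [|k IH]; first by move=> x y h; apply: cjoin_l.
have Hx := comm_pow_cong k Ha.
have Hj' : rel_eq (cjoin (comm_pow al k) al') (@Nabla S A).
  move=> x y; split => // _.
  have Hr : subrel al' (cjoin (comm_pow al k) al') by move=> u v h; apply: cjoin_r.
  apply: (cjoin_min (cjoin_cong _ _) IH Hr); by apply/Hj.
have C := core Hmod Hsemi HA Hx Ha' Hj'.
have Hr : subrel al' (cjoin (comm_pow al k.+1) al') by move=> u v h'; apply: cjoin_r.
move=> x y h; exact: (cjoin_min (cjoin_cong _ _) C Hr (IH x y h)).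
Qed.

End Main.

Theorem proposition5p19 (S : signature) (Sigma : identities S)
  (Hmod : congruence_modular Sigma)
  (Hsemi : semidegenerate Sigma)
  (HK : forall B : algebra S, in_variety Sigma B -> K_closed B)
  (Hpres : forall B : algebra S, in_variety Sigma B -> preserves_boolean_center B)
  (A : algebra S) (HA : in_variety Sigma A) (Hhyp : hyperarchimedean A)
  (th : crel A) (Hth : is_congruence th) :
  CBLP th.
Proof.
move=> b [Hb [b' [Hb' [Hm Hj]]]].
pose al := pull b. pose al' := pull b'.
have Ha : is_congruence al := pull_cong Hth Hb.
have Ha' : is_congruence al' := pull_cong Hth Hb'.
have HJ := pull_join Hth Hb Hb' Hj.
have HM : subrel (cmeet al al') th := pull_meet Hth Hm.
have [n [_ Hc]] := Hhyp al Ha.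
pose g := comm_pow al n.
have Hg : is_congruence g := comm_pow_cong n Ha.
have gal : subrel g al := comm_pow_sub Ha (n := n).
have thal : subrel th al := th_pull Hth Hb.
have It := iterate Hmod Hsemi HA Ha Ha' HJ (k := n).
have MOD := Hmod A HA g al' al Hg Ha' Ha gal.
have Eq : forall x y, al x y <-> cjoin g th x y.
  move=> x y; split => h.
  - have h1 : cmeet (cjoin g al') al x y by split; [exact: It|].
    have h2 := proj2 (MOD x y) h1.
    have Hr : subrel (cmeet al' al) (cjoin g th).
      move=> u v [h3 h4]; apply: cjoin_r; apply: HM; by split.
    exact: (cjoin_min (cjoin_cong _ _) (fun u v h => cjoin_l h) Hr h2).
  - exact: (cjoin_min Ha gal thal h).
exists g; split => // X Y; split.
- move=> [x [y [-> [-> h]]]]; exact: (proj2 (Eq x y) h).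
- move=> h; exists (qrep X), (qrep Y); rewrite !qproj_qrep; split => //; split => //.
  apply/Eq; by rewrite /al /pull !qproj_qrep.
Qed.
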